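(* Let $n > m \ge 1$ be integers with $n \ge 2m$, let $\mathbb{S} \subseteq \mathbb{R}$, and let $f:\mathbb{S}\to\mathbb{R}^n$ be a function. Let $U=\begin{bmatrix} U_1 & U_2\end{bmatrix}\in\mathbb{R}^{n\times n}$ be an orthogonal matrix with $U_1\in\mathbb{R}^{n\times m}$ and $U_2\in\mathbb{R}^{n\times(n-m)}$ (so $U_1^TU_1=\mathbb{I}_m$, $U_2^TU_2=\mathbb{I}_{n-m}$, $U_1^TU_2=0$), whose columns form a complete basis of the range of $f(\mu)$ for all $\mu\in\mathbb{S}$. Let $P\in\mathbb{R}^{n\times m}$ be a selection operator such that $P^TU_1$ is invertible, and let $\sigma_1\ge\sigma_2\ge\cdots\ge\sigma_m>0$ be the singular values of $P^TU_1$. For $\mu\in\mathbb{S}$ define the masked projection $\tilde f(\mu)=U_1(P^TU_1)^{-1}P^Tf(\mu)$ and the orthogonal projection $\hat f(\mu)=U_1U_1^Tf(\mu)$. Then for every $\mu\in\mathbb{S}$: (i) $\lVert f(\mu)-\tilde f(\mu)\rVert_2^2 \le \left(1+\sum_{i=1}^m \frac{1-\sigma_i^2}{\sigma_i^2}\right)\lVert(\mathbb{I}-U_1U_1^T)f(\mu)\rVert_2^2$; (ii) if $Z_1\in\mathbb{R}^{m\times m}$, $V_1\in\mathbb{R}^{m\times m}$, $V_2\in\mathbb{R}^{(n-m)\times(n-m)}$ are orthogonal matrices with $P^TU_1=Z_1\,\mathrm{diag}(\sigma_1,\dots,\sigma_m)\,V_1^T$ and $P^TU_2=Z_1\begin{bmatrix}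 \mathrm{diag}(\sqrt{1-\sigma_1^2},\dots,\sqrt{1-\sigma_m^2}) & 0\end{bmatrix}V_2^T$ (i.e. $V_2$ is the right singular matrix of $P^TU_2$ arising in the cosine–sine decomposition of the orthogonal matrix $\begin{bmatrix}P & \breve P\end{bmatrix}^T U$, where $\begin{bmatrix}P & \breve P\end{bmatrix}$ is a permutation matrix), and $y:=V_2^TU_2^Tf(\mu)\in\mathbb{R}^{n-m}$, then $$\lVert \tilde f(\mu)-\hat f(\mu)\rVert_2^2=\sum_{i=1}^m \frac{1-\sigma_i^2}{\sigma_i^2}\,y_i^2\le \sum_{i=1}^m \frac{1-\sigma_i^2}{\sigma_i^2}\,\lVert(\mathbb{I}-U_1U_1^T)f(\mu)\rVert_2^2 .$$
   Context: A selection (mask) operator $P\in\mathbb{R}^{n\times m}$ is a matrix whose columns are $m$ distinct columns $e_{j_1},\dots,e_{j_m}$ of the identity matrix $\mathbb{I}_n$, so that $P^Ty=(y_{j_1},\dots,y_{j_m})^T$. $\mathrm{diag}(a_1,\dots,a_m)$ is the diagonal matrix with diagonal entries $a_i$. $\lVert\cdot\rVert_2$ is the Euclidean norm. *)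

(* Defs.v *)
From HB Require Import structures.
From mathcomp Require Import all_boot all_order all_algebra.
Set Implicit Arguments. Unset Strict Implicit. Unset Printing Implicit Defensive.
Import Order.TTheory GRing.Theory Num.Theory.
Local Open Scope ring_scope.

Definition orthogonal_mx (R : pzRingType) (k : nat) (Q : 'M[R]_k) : Prop :=
  Q^T *m Q = 1%:M.

Definition selection_op (R : pzRingType) (n m : nat) (P : 'M[R]_(n, m)) : Prop :=
  exists j : 'I_m -> 'I_n, injective j /\
    P = \matrix_(i < n, k < m) (i == j k)%:R.

Definition norm2sq (R : pzRingType) (k : nat) (v : 'cV[R]_k) : R :=
  \sum_(i < k) (v i 0) ^+ 2.

Definition singular_values (R : rcfType) (m : nat) (A : 'M[R]_m)
    (s : 'I_m -> R) : Prop :=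
  (forall i, 0 <= s i) /\
  (forall i j : 'I_m, (i <= j)%N -> s j <= s i) /\
  char_poly (A^T *m A) = \prod_(i < m) ('X - ((s i) ^+ 2)%:P).

(* [diag(sqrt(1 - s_1^2),...,sqrt(1 - s_m^2))  0] as an m x p matrix *)
Definition cs_block (R : rcfType) (m p : nat) (s : 'I_m -> R) : 'M[R]_(m, p) :=
  \matrix_(i < m, j < p) (if (i == j :> nat) then Num.sqrt (1 - (s i) ^+ 2) else 0).

Lemma le_m_nm (n m : nat) : (2 * m <= n)%N -> (m <= n - m)%N.
Proof. move=> h; rewrite leq_subRL; first by rewrite addnn -mul2n.
by apply: leq_trans h; rewrite leq_pmull. Qed.

(* Main.v *)
Require Import Defs.
From HB Require Import structures.
From mathcomp Require Import all_boot all_order all_algebra.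
From mathcomp Require Import ring lra.
Import Order.TTheory GRing.Theory Num.Theory.
Local Open Scope ring_scope.

Set Implicit Arguments. Unset Strict Implicit. Unset Printing Implicit Defensive.
Section Helpers.

Variable R : rcfType.

Lemma ns_def k (v : 'cV[R]_k) : norm2sq v = (v^T *m v) 0 0.
Proof. by rewrite /norm2sq !mxE; apply: eq_bigr => i _; rewrite !mxE expr2. Qed.

Lemma ns_ge0 k (v : 'cV[R]_k) : 0 <= norm2sq v.
Proof. by apply: sumr_ge0 => i _; apply: sqr_ge0. Qed.

Lemma trB a b (X Y : 'M[R]_(a,b)) : (X - Y)^T = X^T - Y^T.
Proof. by apply/matrixP=> i j; rewrite !mxE. Qed.
Lemma trD a b (X Y : 'M[R]_(a,b)) : (X + Y)^T = X^T + Y^T.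
Proof. by apply/matrixP=> i j; rewrite !mxE. Qed.

Lemma orth_iso p q (W : 'M[R]_(p, q)) (v : 'cV_q) :
  W^T *m W = 1%:M -> norm2sq (W *m v) = norm2sq v.
Proof. by move=> h; rewrite !ns_def trmx_mul -mulmxA (mulmxA W^T) h mul1mx. Qed.

Lemma orth_contr p q (W : 'M[R]_(p, q)) (x : 'cV_p) :
  W^T *m W = 1%:M -> norm2sq (W^T *m x) <= norm2sq x.
Proof.
move=> h; have := ns_ge0 (x - W *m (W^T *m x)).
rewrite !ns_def.
have -> : (x - W *m (W^T *m x))^T *m (x - W *m (W^T *m x)) = x^T *m x - (W^T *m x)^T *m (W^T *m x).
  rewrite trB mulmxBl !mulmxBr !trmx_mul trmxK.
  rewrite !mulmxA -(mulmxA _ W^T W) h mulmx1.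

  by rewrite subrr subr0.
by rewrite !mxE subr_ge0.
Qed.

Lemma sq_orth p q (W : 'M[R]_(p, q)) : q = p -> W^T *m W = 1%:M -> W *m W^T = 1%:M.
Proof. by move=> e; subst q; exact: mulmx1C. Qed.



Lemma CS k (x y : 'I_k -> R) :
  (\sum_j x j * y j)^+2 <= (\sum_j x j ^+ 2) * (\sum_j y j ^+ 2).
Proof.
pose a j l := x j ^+ 2 * y l ^+ 2.
pose b j l := x j * y j * (x l * y l).
have E : forall j l, (x j * y l - x l * y j)^+2 = a j l + a l j - 2 * b j l.
  by move=> j l; rewrite /a /b; ring.
have H0 : 0 <= \sum_j \sum_l (x j * y l - x l * y j)^+2.
  by apply: sumr_ge0 => j _; apply: sumr_ge0 => l _; apply: sqr_ge0.
have E1 : (\sum_j x j ^+ 2) * (\sum_j y j ^+ 2) = \sum_j \sum_l a j l.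
  by rewrite mulr_suml; apply: eq_bigr => j _; rewrite mulr_sumr.
have E2 : (\sum_j x j * y j)^+2 = \sum_j \sum_l b j l.
  by rewrite expr2 mulr_suml; apply: eq_bigr => j _; rewrite mulr_sumr.
have E3 : \sum_j \sum_l (x j * y l - x l * y j)^+2
   = 2 * (\sum_j \sum_l a j l) - 2 * \sum_j \sum_l b j l.
  under eq_bigr => j _ do under eq_bigr => l _ do rewrite E.
  have S : forall (F G H : 'I_k -> 'I_k -> R), \sum_j \sum_l (F j l + G j l - 2 * H j l)
     = \sum_j\sum_l F j l + \sum_j \sum_l G j l - 2 * \sum_j \sum_l H j l.
    move=> F G H; rewrite mulr_sumr -big_split -sumrB /=; apply: eq_bigr => j _.
    by rewrite mulr_sumr -big_split -sumrB.
  rewrite (S a (fun j l => a l j) b) /= [X in _ + X - _]exchange_big /=.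
  lra.
rewrite E1 E2; move: H0; rewrite E3; lra.
Qed.


Lemma poly_eq_nz (p q : {poly R}) : (forall x, x != 0 -> p.[x] = q.[x]) -> p = q.
Proof.
move=> h; apply/eqP; rewrite -subr_eq0; apply/eqP.
apply: (@roots_geq_poly_eq0 _ _ [seq (i.+1)%:R | i <- iota 0 (size (p - q))]).
- apply/allP => r /mapP [i _ ->]; rewrite /root hornerD hornerN h ?subrr //.
  by rewrite pnatr_eq0.
- rewrite map_inj_uniq ?iota_uniq // => i j /eqP; rewrite eqr_nat => /eqP; case.
  done.
- by rewrite size_map size_iota.
Qed.

Lemma horner_char n (A : 'M[R]_n) x : (char_poly A).[x] = \det (x%:M - A).
Proof.
rewrite /char_poly -horner_evalE -det_map_mx; congr (\det _).
apply/matrixP => i j; rewrite !mxE /= horner_evalE !(hornerE, hornerMn).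
by case: (i == j); rewrite /= ?mulr1n ?mulr0n.
Qed.

Lemma prod_ord_seq m (F : 'I_m -> R) :
  \prod_(i < m) ('X - (F i)%:P) = \prod_(p <- map F (enum 'I_m)) ('X - p%:P).
Proof. by rewrite big_map big_enum. Qed.

Lemma tr_inv_char m (G : 'M[R]_m) (lam : 'I_m -> R) : (0 < m)%N ->
  G \in unitmx -> char_poly G = \prod_(i < m) ('X - (lam i)%:P) ->
  \tr (invmx G) = \sum_i (lam i)^-1.
Proof.
move=> m0 hG hc.
have dG : \det G = \prod_i lam i.
  have := horner_char G 0; rewrite hc horner_prod (_ : 0%:M = 0) ?sub0r; last by apply/matrixP=> i j; rewrite !mxE mul0rn.
  under eq_bigr => i _ do rewrite hornerXsubC sub0r.
  rewrite -scaleN1r detZ prodrN card_ord => /mulfI -> //.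
  by rewrite signr_eq0.
have lnz : forall i, lam i != 0.
  move=> i; apply/eqP => l0; move: hG; rewrite unitmxE dG (bigD1 i) //= l0 mul0r.
  by rewrite unitr0.
have hci : char_poly (invmx G) = \prod_(i < m) ('X - ((lam i)^-1)%:P).
  apply: poly_eq_nz => x x0.
  rewrite horner_char horner_prod.
  have -> : x%:M - invmx G = invmx G *m ((- x) *: (x^-1%:M - G)).
    rewrite -scalemxAr mulmxBr mul_mx_scalar mulVmx // scalerBr scalerA mulNr divff //.
    apply/matrixP => i j; rewrite !mxE; case: (i == j); rewrite /= ?mulr1n ?mulr0n; ring.
  rewrite det_mulmx det_inv detZ -horner_char hc horner_prod dG.
  rewrite -prodfV -[in (- x) ^+ _](card_ord m) -prodr_const -!big_split /=.
  apply: eq_bigr => i _; rewrite !hornerXsubC; have := lnz i; move=> li; field.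
  by rewrite li x0.
have h := @char_poly_trace _ m (invmx G) m0.
have sz : size (map (fun i => (lam i)^-1) (enum 'I_m)) = m by rewrite size_map size_enum_ord.
move: h; rewrite hci prod_ord_seq -[in X in _`_X.-1]sz coefPn_prod_XsubC; last by rewrite sz -lt0n.
rewrite big_map big_enum /= => /eqP; rewrite eqr_opp => /eqP <-.
done.
Qed.

Lemma inv_uniq k (X G : 'M[R]_k) : G \in unitmx -> X *m G = 1%:M -> X = invmx G.
Proof. by move=> hG h; rewrite -[X]mulmx1 -(mulmxV hG) mulmxA h mul1mx. Qed.

Lemma sel_orth n m (P : 'M[R]_(n,m)) : selection_op P -> P^T *m P = 1%:M.
Proof.
case=> j [ij ->]; apply/matrixP => k l; rewrite !mxE.
rewrite (bigD1 (j k)) //= !mxE eqxx mul1r big1 ?addr0.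
  by rewrite (inj_eq ij).
by move=> i /negbTE hi; rewrite !mxE hi mul0r.
Qed.

Lemma complete n m (U1 : 'M[R]_(n,m)) (U2 : 'M[R]_(n,n-m)) : (m <= n)%N ->
  U1^T *m U1 = 1%:M -> U2^T *m U2 = 1%:M -> U1^T *m U2 = 0 ->
  U1 *m U1^T + U2 *m U2^T = 1%:M.
Proof.
move=> hmn hU1 hU2 hU12.
have h21 : U2^T *m U1 = 0 by rewrite -[U2^T *m U1]trmxK trmx_mul trmxK hU12 trmx0.
have hW : (row_mx U1 U2)^T *m row_mx U1 U2 = 1%:M.
  by rewrite tr_row_mx mul_col_row hU1 hU2 hU12 h21 -scalar_mx_block.
have := sq_orth (subnKC hmn) hW.
by rewrite tr_row_mx mul_row_col.
Qed.

Lemma pyth n p q (U1 : 'M[R]_(n,p)) (U2 : 'M[R]_(n,q)) b w :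
  U1^T *m U1 = 1%:M -> U2^T *m U2 = 1%:M -> U1^T *m U2 = 0 ->
  norm2sq (U2 *m b - U1 *m w) = norm2sq b + norm2sq w.
Proof.
move=> hU1 hU2 hU12.
have h21 : U2^T *m U1 = 0 by rewrite -[U2^T *m U1]trmxK trmx_mul trmxK hU12 trmx0.
rewrite !ns_def trB mulmxBl !mulmxBr !trmx_mul -!mulmxA (mulmxA U2^T U2) (mulmxA U2^T U1)
  (mulmxA U1^T U2) (mulmxA U1^T U1) hU1 hU2 hU12 h21 !mul1mx !mul0mx !mulmx0 !subr0.
by rewrite sub0r opprK !mxE.
Qed.

Lemma frob p q (M : 'M[R]_(p,q)) v :
  norm2sq (M *m v) <= \tr (M *m M^T) * norm2sq v.
Proof.
rewrite /norm2sq /mxtrace mulr_suml; apply: ler_sum => i _; rewrite !mxE.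
apply: le_trans (CS (fun j => M i j) (fun j => v j 0)) _.
rewrite ler_wpM2r ?sumr_ge0 // => [j _|]; first exact: sqr_ge0.
by rewrite le_eqVlt; apply/orP; left; apply/eqP; apply: eq_bigr => j _; rewrite !mxE expr2.
Qed.

End Helpers.
Unset Implicit Arguments. Set Strict Implicit. Set Printing Implicit Defensive.


Theorem theorem1 (R : rcfType) (n m : nat)
  (hm : (1 <= m)%N) (hmn : (m < n)%N) (h2m : (2 * m <= n)%N)
  (S : pred R) (f : R -> 'cV[R]_n)
  (U1 : 'M[R]_(n, m)) (U2 : 'M[R]_(n, n - m))
  (hU1 : U1^T *m U1 = 1%:M) (hU2 : U2^T *m U2 = 1%:M) (hU12 : U1^T *m U2 = 0)
  (P : 'M[R]_(n, m)) (hP : selection_op P)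
  (hinv : P^T *m U1 \in unitmx)
  (sigma : 'I_m -> R) (hsv : singular_values (P^T *m U1) sigma)
  (hpos : forall i, 0 < sigma i) :
  let ftilde := fun mu => U1 *m invmx (P^T *m U1) *m P^T *m f mu in
  let fhat := fun mu => U1 *m U1^T *m f mu in
  let c := fun i : 'I_m => (1 - sigma i ^+ 2) / sigma i ^+ 2 in
  forall mu, mu \in S ->
    (* (i) *)
    norm2sq (f mu - ftilde mu)
      <= (1 + \sum_(i < m) c i) * norm2sq ((1%:M - U1 *m U1^T) *m f mu)
    /\
    (* (ii) *)
    (forall (Z1 V1 : 'M[R]_m) (V2 : 'M[R]_(n - m)),
      orthogonal_mx Z1 -> orthogonal_mx V1 -> orthogonal_mx V2 ->
      P^T *m U1 = Z1 *m diag_mx (\row_i sigma i) *m V1^T ->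
      P^T *m U2 = Z1 *m cs_block (n - m) sigma *m V2^T ->
      let y := V2^T *m U2^T *m f mu in
      norm2sq (ftilde mu - fhat mu)
        = \sum_(i < m) c i * (y (widen_ord (le_m_nm h2m) i) 0) ^+ 2
      /\
      \sum_(i < m) c i * (y (widen_ord (le_m_nm h2m) i) 0) ^+ 2
        <= \sum_(i < m) c i * norm2sq ((1%:M - U1 *m U1^T) *m f mu)).
Proof.
move=> ftilde fhat c mu _.
set A := P^T *m U1.
set B := P^T *m U2.
set fv := f mu.
have hPP := sel_orth hP.
have hC := complete (ltnW hmn) hU1 hU2 hU12.
have hC' : 1%:M - U1 *m U1^T = U2 *m U2^T by rewrite -hC addrAC subrr add0r.
set a := U1^T *m fv.
set b := U2^T *m fv.
have ef : fv = U1 *m a + U2 *m b by rewrite /a /b !mulmxA -mulmxDl hC mul1mx.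
have hAi : invmx A *m A = 1%:M := mulVmx hinv.
set M := invmx A *m B.
have eft : ftilde mu = U1 *m a + U1 *m (M *m b).
  rewrite /ftilde -/fv -/A {1}ef mulmxDr; congr (_ + _).
    by rewrite -!mulmxA (mulmxA P^T U1) -/A (mulmxA (invmx A) A) hAi mul1mx.
  by rewrite -!mulmxA (mulmxA P^T U2) -/B (mulmxA (invmx A) B).
have eg : (1%:M - U1 *m U1^T) *m fv = U2 *m b by rewrite hC' -mulmxA.
have nsg : norm2sq ((1%:M - U1 *m U1^T) *m fv) = norm2sq b by rewrite eg orth_iso.
have hAt : A^T \in unitmx by rewrite unitmx_tr.
have hG : A^T *m A \in unitmx by rewrite unitmx_mul hAt hinv.
have hsig0 : forall i, sigma i != 0 by move=> i; rewrite gt_eqF // hpos.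
have trG : \tr (invmx (A^T *m A)) = \sum_i (sigma i ^+ 2)^-1.
  apply: tr_inv_char => //; exact: hsv.2.2.
have eGi : invmx (A^T *m A) = invmx A *m (invmx A)^T.
  apply/esym/inv_uniq => //.
  by rewrite -mulmxA (mulmxA _ A^T) -trmx_mul mulmxV // trmx1 mul1mx hAi.
have hBB : B *m B^T = 1%:M - A *m A^T.
  rewrite /B /A !trmx_mul !trmxK -mulmxA (mulmxA U2) -hC' mulmxBl mul1mx mulmxBr hPP.
  by rewrite !mulmxA.
have sumc : \sum_i c i = \sum_i (sigma i ^+ 2)^-1 - m%:R.
  rewrite -[m in m%:R]card_ord -sumr_const -sumrB; apply: eq_bigr => i _.
  by rewrite /c; field; exact: hsig0.
have trM : \tr (M *m M^T) = \sum_i c i.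
  rewrite /M trmx_mul -mulmxA (mulmxA B) hBB mulmxBl mul1mx mulmxBr.
  rewrite -(mulmxA A) -trmx_mul hAi trmx1 mulmx1 hAi.
  by rewrite -eGi raddfB /= trG mxtrace1 sumc.
have e1 : fv - ftilde mu = U2 *m b - U1 *m (M *m b).
  by rewrite eft {1}ef opprD addrA [U1 *m a + _]addrC addrK.
split.
  by rewrite e1 pyth // nsg mulrDl mul1r lerD2l -trM; exact: frob.
move=> Z1 V1 V2 oZ oV1 oV2 dA dB y.
rewrite /orthogonal_mx in oZ oV1 oV2.
have hV1t : V1 *m V1^T = 1%:M := sq_orth erefl oV1.
have hV2t : V2 *m V2^T = 1%:M := sq_orth erefl oV2.
set D := diag_mx (\row_i sigma i).
set Di := diag_mx (\row_i (sigma i)^-1).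
have hDiD : Di *m D = 1%:M.
  rewrite /Di /D mul_diag_mx; apply/matrixP => i j; rewrite !mxE.
  by case: (i == j); rewrite ?mulr1n ?mulr0n ?mulr0 // mulVf.
have eAi : invmx A = V1 *m Di *m Z1^T.
  apply/esym/inv_uniq => //; rewrite dA.
  rewrite !mulmxA -(mulmxA _ Z1^T Z1) oZ mulmx1 -(mulmxA _ Di D) hDiD mulmx1.
  exact: hV1t.
have eMb : M *m b = V1 *m (Di *m (cs_block (n-m) sigma *m y)).
  rewrite /M eAi dB /y /b !mulmxA -(mulmxA _ Z1^T Z1) oZ mulmx1.
  done.
have e2 : ftilde mu - fhat mu = U1 *m (M *m b).
  by rewrite eft /fhat -/fv -mulmxA -/a addrAC subrr add0r.
have cs_mul : forall (v : 'cV_(n-m)) i, (cs_block (n-m) sigma *m v) i 0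
    = Num.sqrt (1 - sigma i ^+2) * v (widen_ord (le_m_nm h2m) i) 0.
  move=> v i; rewrite !mxE (bigD1 (widen_ord (le_m_nm h2m) i)) //= !mxE eqxx big1 ?addr0 //.
  move=> l hl; rewrite !mxE; case: ifP => [/eqP e|_]; last by rewrite mul0r.
  by exfalso; move/negP: hl; apply; apply/eqP/val_inj; rewrite /= e.
have hs1 : forall i, sigma i ^+ 2 <= 1.
  move=> i; pose e : 'cV[R]_m := delta_mx i 0.
  have nse : norm2sq e = 1.
    rewrite /norm2sq (bigD1 i) //= !mxE eqxx big1 ?addr0 ?expr1n //.
    by move=> k hk; rewrite !mxE (negbTE hk) /= expr2 mul0r.
  have h1 : norm2sq (A *m (V1 *m e)) <= 1.
    rewrite /A -mulmxA; apply: le_trans (orth_contr _ hPP) _.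
    by rewrite orth_iso // orth_iso // nse.
  have h2 : A *m (V1 *m e) = Z1 *m (sigma i *: e).
    rewrite dA -!mulmxA (mulmxA V1^T V1) oV1 mul1mx; congr (_ *m _).
    rewrite /D mul_diag_mx; apply/matrixP => k l; rewrite !mxE.
    case: (eqVneq k i) => [-> //|hk].
    by rewrite /= !mulr0.
  move: h1; rewrite h2 orth_iso // /norm2sq.
  under eq_bigr => k _ do rewrite mxE exprMn.
  by rewrite -mulr_sumr -/(norm2sq e) nse mulr1.
have c_ge0 : forall i, 0 <= c i.
  by move=> i; rewrite /c divr_ge0 ?sqr_ge0 // subr_ge0.
have nsy : norm2sq y = norm2sq b.
  rewrite /y -mulmxA -/b orth_iso //; by rewrite trmxK.
split.
  rewrite e2 orth_iso // eMb orth_iso // /norm2sq; apply: eq_bigr => i _.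
  rewrite mul_diag_mx mxE cs_mul mxE !exprMn sqr_sqrtr ?subr_ge0 //.
  by rewrite /c; field; exact: hsig0.
apply: ler_sum => i _; apply: ler_wpM2l => //.
rewrite nsg -nsy /norm2sq (bigD1 (widen_ord (le_m_nm h2m) i)) //= lerDl.
by apply: sumr_ge0 => k _; exact: sqr_ge0.
Qed.
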